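(* Let $(X,d,f)$ be a TDS, $\mu\in\mathcal M(X)$, $K\subset X$ a Borel set, $\alpha\ge0$, and $\varphi\in C(X,\mathbb R)$ with $\varphi>0$. For each $s\in(0,\infty)$: (1) if $P^\alpha_\mu(f,x,\varphi)\le s$ for all $x\in K$, then $\dim^\alpha_{BS}(f,K,\varphi)\le s$; (2) if $P^\alpha_\mu(f,x,\varphi)\ge s$ for all $x\in K$ and $\mu(K)>0$, then $\dim^\alpha_{BS}(f,K,\varphi)\ge s$.
   Context: A TDS $(X,d,f)$: compact metric space and continuous $f$; $\mathcal M(X)$ is the set of Borel probability measures on $X$. $S_n\varphi(x)=\sum_{j=0}^{n-1}\varphi(f^jx)$; $d_n^\alpha(x,y)=\max_{0\le i\le n-1}e^{\alpha i}d(f^ix,f^iy)$; $B_n^\alpha(x,\varepsilon)=\{y:d_n^\alpha(x,y)<\varepsilon\}$. $\alpha$-BS dimension: $M^\alpha(K,s,\varepsilon,n,\varphi)=\inf\sum_i\exp\big(-s\sup_{y\in B^\alpha_{n_i}(x_i,\varepsilon)}S_{n_i}\varphi(y)\big)$ over finite or countable families $\{B^\alpha_{n_i}(x_i,\varepsilon)\}$, $x_i\in X$, $n_i\ge n$, covering $K$; $M^\alpha(K,s,\varepsilon,\varphi)=\lim_n M^\alpha(K,s,\varepsilon,n,\varphi)$; $M^\alpha(K,\varepsilon,\varphi)=\inf\{s:M^\alpha(K,s,\varepsilon,\varphi)=0\}=\sup\{s:M^\alpha(K,s,\varepsilon,\varphi)=\infty\}$; $\dim^\alpha_{BS}(f,K,\varphi)=\lim_{\varepsilon\to0}M^\alpha(K,\varepsilon,\varphi)$.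 Pointwise $\alpha$-local Brin–Katok entropy: $P^\alpha_\mu(f,x,\varphi)=\lim_{\varepsilon\to0}\liminf_{n\to\infty}\frac{-\log\mu(B_n^\alpha(x,\varepsilon))}{S_n\varphi(x)}$. *)

(* Defs.v *)
From HB Require Import structures.
From mathcomp Require Import all_boot all_order all_algebra.
From mathcomp Require Import all_classical all_reals all_analysis.
Set Implicit Arguments. Unset Strict Implicit. Unset Printing Implicit Defensive.
Import Order.TTheory GRing.Theory Num.Theory numFieldNormedType.Exports.
Local Open Scope classical_set_scope.
Local Open Scope ring_scope.

(* Metric spaces with a distinguished point.  MathComp-Analysis measurable
   types are required to be pointed; since X carries a probability measure it
   is nonempty, so this costs nothing. *)
#[short(type="pmetricType")]
HB.structure Definition PointedMetric (K : numDomainType) :=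
  {T of Pointed T & Metric K T}.

Section Defs.
Context {R : realType} {X : pmetricType R}.

Definition borel_type := g_sigma_algebraType (@open X).

Definition birkhoff_sum (f : X -> X) (phi : X -> R) (n : nat) (x : X) : R :=
  \sum_(j < n) phi (iter j f x).

Definition dn_alpha (f : X -> X) (alpha : R) (n : nat) (x y : X) : R :=
  \big[Num.max/0]_(i < n) (expR (alpha * i%:R) * mdist (iter i f x) (iter i f y)).

Definition bowen_ball (f : X -> X) (alpha : R) (n : nat) (x : X) (eps : R) : set X :=
  [set y | dn_alpha f alpha n x y < eps].

Local Open Scope ereal_scope.

Definition ball_weight (f : X -> X) (alpha : R) (phi : X -> R) (s eps : R)
    (m : nat) (x : X) : \bar R :=
  expeR ((- s)%:E *
    ereal_sup [set (birkhoff_sum f phi m y)%:E | y in bowen_ball f alpha m x eps]).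

Definition M_n (f : X -> X) (alpha : R) (phi : X -> R) (K : set X) (s eps : R)
    (n : nat) : \bar R :=
  ereal_inf [set v | exists (I : set nat) (ns : nat -> nat) (xs : nat -> X),
      [/\ (forall i, I i -> (n <= ns i)%N),
           K `<=` \bigcup_(i in I) bowen_ball f alpha (ns i) (xs i) eps &
           v = \esum_(i in I) ball_weight f alpha phi s eps (ns i) (xs i)]].

Definition M_s (f : X -> X) (alpha : R) (phi : X -> R) (K : set X) (s eps : R) : \bar R :=
  limn (fun n => M_n f alpha phi K s eps n).

Definition M_eps (f : X -> X) (alpha : R) (phi : X -> R) (K : set X) (eps : R) : \bar R :=
  ereal_inf [set s%:E | s in [set s : R | M_s f alpha phi K s eps = 0]].

Definition dim_BS (f : X -> X) (alpha : R) (phi : X -> R) (K : set X) : \bar R :=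
  lim (M_eps f alpha phi K eps @[eps --> 0%R^'+]).

Definition local_BK_entropy (f : X -> X) (alpha : R) (phi : X -> R)
    (mu : set borel_type -> \bar R) (x : X) : \bar R :=
  lim ((fun eps : R => limn_einf (fun n =>
          (- lne (mu (bowen_ball f alpha n x eps))) *
          ((birkhoff_sum f phi n x)^-1)%:E)) eps @[eps --> 0%R^'+]).

End Defs.

(* Main.v *)
Require Import Defs.
From HB Require Import structures.
From mathcomp Require Import all_boot all_order all_algebra.
From mathcomp Require Import all_classical all_reals all_analysis.
From mathcomp Require Import ring lra finmap.
Set Implicit Arguments. Unset Strict Implicit. Unset Printing Implicit Defensive.
Import Order.TTheory GRing.Theory Num.Theory numFieldNormedType.Exports.
Local Open Scope classical_set_scope.
Local Open Scope ring_scope.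

Section Basic.
Context {R : realType} {X : pmetricType R} (f : X -> X) (alpha : R) (phi : X -> R).

Local Notation dn := (dn_alpha f alpha).
Local Notation B := (bowen_ball f alpha).

Lemma dn_ge0 n x y : 0 <= dn n x y.
Proof.
rewrite /dn_alpha; elim/big_ind: _ => //.
  by move=> a b a0 b0; rewrite le_max a0.
by move=> i _; rewrite mulr_ge0 ?expR_ge0 // mdist_ge0.
Qed.

Lemma dn_leP n x y c : 0 <= c ->
  (forall i : 'I_n, expR (alpha * i%:R) * mdist (iter i f x) (iter i f y) <= c) ->
  dn n x y <= c.
Proof. by move=> c0 H; apply/bigmax_leP; split. Qed.

Lemma dn_ge n x y (i : 'I_n) :
  expR (alpha * i%:R) * mdist (iter i f x) (iter i f y) <= dn n x y.
Proof. exact: (le_bigmax _ (fun i : 'I_n => expR (alpha * i%:R) * mdist (iter i f x) (iter i f y))). Qed.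

Lemma dnxx n x : dn n x x = 0.
Proof.
apply/eqP; rewrite eq_le dn_ge0 andbT; apply: dn_leP => // i.
by rewrite mdistxx mulr0.
Qed.

Lemma dn_sym n x y : dn n x y = dn n y x.
Proof. by rewrite /dn_alpha; apply: eq_bigr => i _; rewrite metric_sym. Qed.

Lemma dn_triangle n x y z : dn n x z <= dn n x y + dn n y z.
Proof.
apply: dn_leP; first by rewrite addr_ge0 // dn_ge0.
move=> i; apply: le_trans (lerD (dn_ge x y i) (dn_ge y z i)).
rewrite -mulrDr ler_wpM2l ?expR_ge0 //; exact: metric_triangle.
Qed.

Lemma dn_mono m n x y : (m <= n)%N -> dn m x y <= dn n x y.
Proof.
move=> mn; apply: dn_leP; first exact: dn_ge0.
move=> i; have iN : (i < n)%N by apply: leq_trans (ltn_ord i) mn.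
exact: (dn_ge x y (Ordinal iN)).
Qed.

Lemma mdist_le_dn n x y j : 0 <= alpha -> (j < n)%N ->
  mdist (iter j f x) (iter j f y) <= dn n x y.
Proof.
move=> a0 jn; apply: le_trans (dn_ge x y (Ordinal jn)) => /=.
rewrite ler_peMl ?mdist_ge0 // -expR0 ler_expR mulr_ge0 //.
Qed.

Lemma ball_center n x e : 0 < e -> B n x e x.
Proof. by move=> e0; rewrite /bowen_ball /= dnxx. Qed.

Lemma ball_mono_eps n x e1 e2 : e1 <= e2 -> B n x e1 `<=` B n x e2.
Proof. by move=> e12 y /= /lt_le_trans; apply. Qed.

Lemma ball_mono_n m n x e : (m <= n)%N -> B n x e `<=` B m x e.
Proof. by move=> mn y /= H; apply: le_lt_trans H; apply: dn_mono. Qed.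

Lemma birkhoff_ge n x m : (forall y, m <= phi y) -> n%:R * m <= birkhoff_sum f phi n x.
Proof.
move=> H; have -> : n%:R * m = \sum_(i < n) m by rewrite sumr_const card_ord mulr_natl.
by apply: ler_sum => i _; apply: H.
Qed.

Lemma birkhoff_le n x M : (forall y, phi y <= M) -> birkhoff_sum f phi n x <= n%:R * M.
Proof.
move=> H; have -> : n%:R * M = \sum_(i < n) M by rewrite sumr_const card_ord mulr_natl.
by apply: ler_sum => i _; apply: H.
Qed.

End Basic.

Section Topo.
Context {R : realType} {X : pmetricType R}.

Lemma mdist_cont (a : X) : continuous (fun z : X => mdist a z).
Proof.
move=> z; apply/cvgrPdist_lt => e e0.
apply/nbhs_ballP; exists e => // w; rewrite ballEmdist /= => zw.
rewrite ltr_norml; have := metric_triangle a z w; have := metric_triangle a w z.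
rewrite (metric_sym w z) => h1 h2; apply/andP; split; lra.
Qed.

Lemma iter_cont (f : X -> X) j : continuous f -> continuous (iter j f).
Proof.
move=> fc; elim: j => [|j IH] x /=; first exact: cvg_id.
exact: (continuous_comp (IH x) (fc _)).
Qed.

Lemma bigmax_cont (I : Type) (r : seq I) (G : I -> X -> R) :
  (forall i, continuous (G i)) ->
  continuous (fun y => \big[Num.max/0]_(i <- r) G i y).
Proof.
move=> Gc; elim: r => [|a r IH].
  have -> : (fun y => \big[Num.max/0]_(i <- [::]) G i y) = fun=> 0.
    by apply/funext => y; rewrite big_nil.
  exact: cst_continuous.
have -> : (fun y => \big[Num.max/0]_(i <- a :: r) G i y) =
  (G a) \max (fun y => \big[Num.max/0]_(i <- r) G i y).
  by apply/funext => y; rewrite big_cons.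
exact: max_fun_continuous.
Qed.

Lemma dn_cont (f : X -> X) alpha n x : continuous f ->
  continuous (dn_alpha f alpha n x).
Proof.
move=> fc; have := (@bigmax_cont _ (index_enum 'I_n)
  (fun (i : 'I_n) y => expR (alpha * i%:R) * mdist (iter i f x) (iter i f y))).
apply.
move=> i y; apply: (continuousM (s:=fun=> expR (alpha * i%:R)) (t:=fun y => mdist (iter i f x) (iter i f y))); first exact: cst_continuous.
exact: (continuous_comp (iter_cont (j:=i) fc (x:=y)) (mdist_cont (a:=iter i f x) (x:=iter i f y))).
Qed.

Lemma bowen_open (f : X -> X) alpha n x e : continuous f ->
  open (bowen_ball f alpha n x e).
Proof.
move=> fc; rewrite /bowen_ball.
have -> : [set y | dn_alpha f alpha n x y < e] =
  dn_alpha f alpha n x @^-1` [set r | r < e] by [].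
apply: open_comp; last exact: open_lt.
by move=> y _; apply: dn_cont.
Qed.

Lemma open_meas (A : set X) : open A -> measurable (A : set (@borel_type R X)).
Proof. by move=> oA; apply: sub_sigma_algebra. Qed.

Lemma ball_meas (f : X -> X) alpha n x e : continuous f ->
  measurable (bowen_ball f alpha n x e : set (@borel_type R X)).
Proof. by move=> fc; apply: open_meas; apply: bowen_open. Qed.

Lemma fin_pos_lb (s : seq X) (g : X -> R) : (forall x, 0 < g x) ->
  exists2 m, 0 < m & forall x, x \in s -> m <= g x.
Proof.
move=> gp; elim: s => [|a s [m m0 Hm]]; first by exists 1.
exists (Num.min (g a) m); first by rewrite lt_min gp m0.
move=> x; rewrite inE => /orP[/eqP->|xs]; first by rewrite ge_min lexx.
by rewrite ge_min Hm ?orbT.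
Qed.

Lemma cpt_min (phi : X -> R) : compact [set: X] -> continuous phi ->
  (forall x, 0 < phi x) -> exists2 m, 0 < m & forall x, m <= phi x.
Proof.
move=> cX pc pp; move: cX; rewrite compact_cover => /(_ X setT
  (fun x => phi @^-1` [set r | phi x / 2 < r])).
case.
- move=> x _; apply: open_comp; last exact: open_gt.
  by move=> y _; apply: pc.
- by move=> y _; exists y => //=; rewrite ltr_pdivrMr // ltr_pMr ?pp // ltr1n.
move=> D' _ cov.
have [m m0 Hm] := fin_pos_lb (enum_fset D') (g:=fun x => phi x / 2)
  (fun x => divr_gt0 (pp x) (ltr0Sn _ 1)).
exists m => // y; have [x /= xD yx] := cov y I.
apply/ltW; apply: le_lt_trans yx; apply: Hm.
by exact: xD.
Qed.

Lemma cpt_max (phi : X -> R) : compact [set: X] -> continuous phi ->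
  exists M, forall x, phi x <= M.
Proof.
move=> cX pc; move: cX; rewrite compact_cover => /(_ X setT
  (fun x => phi @^-1` [set r | r < phi x + 1])).
case.
- move=> x _; apply: open_comp; last exact: open_lt.
  by move=> y _; apply: pc.
- by move=> y _; exists y => //=; rewrite ltrDl.
move=> D' _ cov.
exists (\sum_(x <- enum_fset D') `|phi x + 1|) => y.
have [x /= xD yx] := cov y I.
apply: le_trans (ltW yx) _; apply: le_trans (ler_norm _) _.
have xD' : x \in enum_fset D' by exact: xD.
rewrite (big_rem _ xD') /= lerDl sumr_ge0 //.
Qed.

Lemma heine (phi : X -> R) : compact [set: X] -> continuous phi ->
  forall th, 0 < th -> exists2 rho, 0 < rho &
    forall y z, mdist y z < rho -> `|phi y - phi z| < th.
Proof.
move=> cX pc th th0.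
have H : forall x, {r : R | 0 < r /\ forall y, mdist x y < r -> `|phi x - phi y| < th / 2}.
  move=> x; apply: cid.
  have := pc x; move/cvgrPdist_lt => /(_ (th / 2)); rewrite divr_gt0 // => /(_ isT).
  move/nbhs_ballP => [r r0 Hr]; exists r; split => // y xy; apply: Hr.
  by rewrite ballEmdist.
pose r x := sval (H x).
have r0 x : 0 < r x by exact: (proj1 (svalP (H x))).
have rP x y : mdist x y < r x -> `|phi x - phi y| < th / 2.
  exact: (proj2 (svalP (H x)) y).
move: cX; rewrite compact_cover => /(_ X setT
  (fun x => [set y | mdist x y < r x / 2])).
case.
- move=> x _; apply: (@open_comp _ _ (fun y => mdist x y) [set u | u < r x / 2]); [by move=> y _; exact: mdist_cont | exact: open_lt].
- move=> y _; exists y => //=; rewrite mdistxx divr_gt0 //.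
move=> D' _ cov.
have [m m0 Hm] := fin_pos_lb (enum_fset D') (g:=fun x => r x / 2)
  (fun x => divr_gt0 (r0 x) (ltr0Sn _ 1)).
exists m => // y z yz.
have [x /= xD xy] := cov y I.
have xD' : x \in enum_fset D' by exact: xD.
have xz : mdist x z < r x.
  apply: le_lt_trans (metric_triangle x y z) _.
  rewrite (splitr (r x)) ltrD //; apply: lt_le_trans yz _; exact: Hm.
have xy' : mdist x y < r x.
  by apply: lt_le_trans xy _; rewrite ler_pdivrMr // ler_pMr ?r0 // ler1n.
rewrite (_ : phi y - phi z = (phi x - phi z) - (phi x - phi y)); last by ring.
apply: le_lt_trans (ler_normB _ _) _.
by rewrite (splitr th) ltrD // rP.
Qed.

End Topo.

Section Ereal.
Context {R : realType}.
Local Open Scope ereal_scope.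

Lemma ent_lt (m : \bar R) (S t : R) : (0 < S)%R ->
  (- lne m) * (S^-1)%:E < t%:E -> (expR (- (t * S)))%:E < m.
Proof.
move=> S0; case: m => [r| |] /=.
- case: ifPn => [r0|]; first by rewrite /= gt0_mulye ?lte_fin ?invr_gt0 // ltNge leey.
  rewrite -ltNge => r0; rewrite -EFinM lte_fin => H.
  rewrite lte_fin -[X in (_ < X)%R](lnK r0) ltr_expR.
  have : (- ln r < t * S)%R by rewrite -(ltr_pdivrMr _ _ S0).
  lra.
- by rewrite ltry.
- by rewrite /= gt0_mulye ?lte_fin ?invr_gt0 // ltNge leey.
Qed.

Lemma ent_gt (m : \bar R) (S t : R) : (0 < S)%R -> 0 <= m ->
  t%:E < (- lne m) * (S^-1)%:E -> m <= (expR (- (t * S)))%:E.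
Proof.
move=> S0; case: m => [r| |] //= m0.
- case: ifPn => [r0|]; first by move=> _; rewrite lee_fin (le_trans r0) // expR_ge0.
  rewrite -ltNge => r0; rewrite -EFinM lte_fin => H.
  rewrite lee_fin -[X in (X <= _)%R](lnK r0) ler_expR.
  have : (t * S < - ln r)%R by rewrite -(ltr_pdivlMr _ _ S0).
  lra.
- by rewrite /= gt0_mulNye ?lte_fin ?invr_gt0 // ltNge leNye.
Qed.

Lemma ent_mono (m1 m2 : \bar R) (c : R) : 0 <= m1 -> m1 <= m2 -> (0 <= c)%R ->
  (- lne m2) * c%:E <= (- lne m1) * c%:E.
Proof.
move=> m10 m12 c0; apply: lee_wpmul2r; first by rewrite lee_fin.
rewrite leeN2; apply: (@le_trans _ _ (lne m1)) => //.
have [m2y|m2y] := eqVneq m2 +oo; first by rewrite m2y; exact: leey.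
by rewrite lee_lne // !in_itv /= ?leey ?andbT ?m10 ?(le_trans m10 m12).
Qed.

Lemma liminfE (u : (\bar R)^nat) : limn_einf u = ereal_sup (range (einfs u)).
Proof. by rewrite limn_einf_lim; apply/cvg_lim => //; exact: cvg_einfs_sup. Qed.

Lemma liminf_lt (u : (\bar R)^nat) c : limn_einf u < c ->
  forall N, exists2 n, (N <= n)%N & u n < c.
Proof.
rewrite liminfE => H N.
have : einfs u N < c.
  apply: le_lt_trans H; apply: ereal_sup_ubound; by exists N.
by move/ereal_inf_lt => [_ [n /= Nn <-] unc]; exists n.
Qed.

Lemma liminf_gt (u : (\bar R)^nat) c : c < limn_einf u ->
  exists N, forall n, (N <= n)%N -> c < u n.
Proof.
rewrite liminfE => /ereal_sup_gt [_ [N _ <-] H]; exists N => n Nn.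
apply: lt_le_trans H _; apply: ereal_inf_lbound; by exists n.
Qed.

Lemma liminf_le (u v : (\bar R)^nat) : (forall n, u n <= v n) ->
  limn_einf u <= limn_einf v.
Proof.
move=> uv; rewrite !liminfE; apply: ge_ereal_sup => _ [N _ <-].
apply: (@le_trans _ _ (einfs v N)); last by apply: ereal_sup_ubound; exists N.
apply: le_ereal_inf_tmp => _ [n /= Nn <-].
apply: le_trans (uv n); apply: ereal_inf_lbound; by exists n.
Qed.

Lemma lim_noninc (g : R -> \bar R) :
  (forall a b, (0 < a)%R -> (a <= b)%R -> g b <= g a) ->
  lim (g e @[e --> 0%R^'+]) = ereal_sup (g @` [set e | (0 < e)%R]).
Proof.
move=> H; apply/cvg_lim => //.
have := @nonincreasing_at_right_cvge R g 0%R (BInfty _ false) isT.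
have eqS : [set` Interval (BRight 0%R) (BInfty R false)] = [set e | (0 < e)%R].
  by apply/seteqP; split => x /=; rewrite in_itv /= andbT.
rewrite eqS; apply => a b; rewrite !in_itv /= !andbT => a0 b0 ab.
exact: H.
Qed.

Lemma lim_noninc_ge (g : R -> \bar R) e :
  (forall a b, (0 < a)%R -> (a <= b)%R -> g b <= g a) -> (0 < e)%R ->
  g e <= lim (g e @[e --> 0%R^'+]).
Proof. by move=> H e0; rewrite lim_noninc //; apply: ereal_sup_ubound; exists e. Qed.

Lemma lim_noninc_le (g : R -> \bar R) c :
  (forall a b, (0 < a)%R -> (a <= b)%R -> g b <= g a) ->
  (forall e, (0 < e)%R -> g e <= c) ->
  lim (g e @[e --> 0%R^'+]) <= c.
Proof. by move=> H Hc; rewrite lim_noninc //; apply: ge_ereal_sup => _ [e e0 <-]; exact: Hc. Qed.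

End Ereal.

Section Weights.
Context {R : realType} {X : pmetricType R} (f : X -> X) (alpha : R) (phi : X -> R).
Hypothesis phi_pos : forall x, 0 < phi x.
Local Open Scope ereal_scope.

Local Notation S := (birkhoff_sum f phi).
Local Notation B := (bowen_ball f alpha).
Local Notation W := (ball_weight f alpha phi).
Local Notation SUP e n x := (ereal_sup [set (S n y)%:E | y in B n x e]).

Lemma S_ge0 n x : (0 <= S n x)%R.
Proof. by rewrite /birkhoff_sum sumr_ge0 // => i _; apply/ltW. Qed.

Lemma sup_ge e n x : (0 < e)%R -> (S n x)%:E <= SUP e n x.
Proof. by move=> e0; apply: ereal_sup_ubound; exists x => //; apply: ball_center. Qed.

Lemma sup_ge0 e n x : (0 < e)%R -> 0 <= SUP e n x.
Proof. by move=> e0; apply: le_trans (sup_ge n x e0); rewrite lee_fin S_ge0. Qed.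

Lemma W_ge0 t e n x : 0 <= W t e n x.
Proof. exact: expeR_ge0. Qed.

Lemma mulNt_le (t : R) (a b : \bar R) : (0 <= t)%R -> a <= b ->
  (- t)%:E * b <= (- t)%:E * a.
Proof.
move=> t0 ab; rewrite EFinN !mulNe leeN2; apply: lee_wpmul2l => //.
Qed.

Lemma W_le t e n x : (0 <= t)%R -> (0 < e)%R ->
  W t e n x <= (expR (- (t * S n x)))%:E.
Proof.
move=> t0 e0; rewrite /ball_weight.
have -> : (expR (- (t * S n x)))%:E = expeR ((- t)%:E * (S n x)%:E).
  by rewrite -EFinM /= mulNr.
by rewrite lee_expeR; apply: mulNt_le => //; apply: sup_ge.
Qed.

Lemma W_ge t e n x c : (0 <= t)%R -> SUP e n x <= c%:E ->
  (expR (- (t * c)))%:E <= W t e n x.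
Proof.
move=> t0 Hc; rewrite /ball_weight.
have -> : (expR (- (t * c)))%:E = expeR ((- t)%:E * c%:E).
  by rewrite -EFinM /= mulNr.
by rewrite lee_expeR; apply: mulNt_le.
Qed.

Lemma W_mono_t t1 t2 e n x : (0 < e)%R -> (t1 <= t2)%R -> W t2 e n x <= W t1 e n x.
Proof.
move=> e0 t12; rewrite /ball_weight lee_expeR lee_wpmul2r ?sup_ge0 //.
by rewrite lee_fin lerN2.
Qed.

Lemma W_mono_e t e1 e2 n x : (0 <= t)%R -> (e1 <= e2)%R ->
  W t e2 n x <= W t e1 n x.
Proof.
move=> t0 e12; rewrite /ball_weight lee_expeR; apply: mulNt_le => //.
apply: ereal_sup_le => _ [y /= Hy <-]; exists y => //.
exact: ball_mono_eps Hy.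
Qed.

Lemma W_ge1 t e n x : (0 < e)%R -> (t <= 0)%R -> 1 <= W t e n x.
Proof.
move=> e0 t0; rewrite /ball_weight -expeR0 lee_expeR mule_ge0 ?sup_ge0 //.
by rewrite lee_fin oppr_ge0.
Qed.

End Weights.

Section Mlemmas.
Context {R : realType} {X : pmetricType R} (f : X -> X) (alpha : R) (phi : X -> R).
Hypothesis phi_pos : forall x, 0 < phi x.
Variable K : set X.
Local Open Scope ereal_scope.

Local Notation W := (ball_weight f alpha phi).
Local Notation Mn := (M_n f alpha phi K).
Local Notation Ms := (M_s f alpha phi K).
Local Notation Me := (M_eps f alpha phi K).

Lemma Mn_ge0 t e n : 0 <= Mn t e n.
Proof.
apply: le_ereal_inf_tmp => _ [I [ns [xs [_ _ ->]]]].
by apply: esum_ge0 => i _; apply: W_ge0.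
Qed.

Lemma Mn_lb t e n c :
  (forall (I : set nat) (ns : nat -> nat) (xs : nat -> X), (forall i, I i -> (n <= ns i)%N) ->
     K `<=` \bigcup_(i in I) bowen_ball f alpha (ns i) (xs i) e ->
     c <= \esum_(i in I) W t e (ns i) (xs i)) -> c <= Mn t e n.
Proof. by move=> H; apply: le_ereal_inf_tmp => _ [I [ns [xs [H1 H2 ->]]]]; apply: H. Qed.

Lemma Mn_ub t e n (I : set nat) (ns : nat -> nat) (xs : nat -> X) : (forall i, I i -> (n <= ns i)%N) ->
  K `<=` \bigcup_(i in I) bowen_ball f alpha (ns i) (xs i) e ->
  Mn t e n <= \esum_(i in I) W t e (ns i) (xs i).
Proof. by move=> H1 H2; apply: ereal_inf_lbound; exists I, ns, xs. Qed.

Lemma Mn_nondec t e n1 n2 : (n1 <= n2)%N -> Mn t e n1 <= Mn t e n2.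
Proof.
move=> n12; apply: Mn_lb => I ns xs H1 H2; apply: Mn_ub => // i Ii.
exact: leq_trans n12 (H1 i Ii).
Qed.

Lemma Ms_sup t e : Ms t e = ereal_sup (range (Mn t e)).
Proof.
rewrite /M_s; apply/cvg_lim => //; apply: ereal_nondecreasing_cvgn.
by move=> n1 n2; apply: Mn_nondec.
Qed.

Lemma Mn_le_Ms t e n : Mn t e n <= Ms t e.
Proof. by rewrite Ms_sup; apply: ereal_sup_ubound; exists n. Qed.

Lemma Ms_le t e c : (forall n, Mn t e n <= c) -> Ms t e <= c.
Proof. by move=> H; rewrite Ms_sup; apply: ge_ereal_sup => _ [n _ <-]. Qed.

Lemma Ms_ge0 t e : 0 <= Ms t e.
Proof. exact: le_trans (Mn_ge0 t e 0) (Mn_le_Ms t e 0). Qed.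

Lemma Mn_empty t e n : K = set0 -> Mn t e n = 0.
Proof.
move=> K0; apply/eqP; rewrite eq_le Mn_ge0 andbT.
rewrite -(esum_set0 (fun i : nat => W t e i (point : X))).
by apply: (@Mn_ub t e n set0 id (fun=> point)) => //; rewrite K0.
Qed.

Lemma Ms_empty t e : K = set0 -> Ms t e = 0.
Proof.
move=> K0; apply/eqP; rewrite eq_le Ms_ge0 andbT; apply: Ms_le => n.
by rewrite Mn_empty.
Qed.

Lemma Mn_ge1 t e n : K !=set0 -> (0 < e)%R -> (t <= 0)%R -> 1 <= Mn t e n.
Proof.
move=> [x Kx] e0 t0; apply: Mn_lb => I ns xs _ H2.
have [i Ii _] := H2 x Kx.
apply: esum_ge; exists [set i]; first by split; [exact: finite_set1| move=> j ->].
by rewrite fsbig_set1; apply: W_ge1.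
Qed.

Lemma Ms_ge1 t e : K !=set0 -> (0 < e)%R -> (t <= 0)%R -> 1 <= Ms t e.
Proof. by move=> *; apply: le_trans (Mn_le_Ms t e 0); apply: Mn_ge1. Qed.

Lemma Mn_mono_e t e1 e2 n : (0 <= t)%R -> (e1 <= e2)%R -> Mn t e2 n <= Mn t e1 n.
Proof.
move=> t0 e12; apply: Mn_lb => I ns xs H1 H2.
apply: le_trans (@Mn_ub t e2 n I ns xs H1 _) _.
  by move=> x /H2 [i Ii Hb]; exists i => //; exact: ball_mono_eps Hb.
by apply: le_esum => i _; apply: W_mono_e.
Qed.

Lemma Ms_mono_e t e1 e2 : (0 <= t)%R -> (e1 <= e2)%R -> Ms t e2 <= Ms t e1.
Proof.
move=> t0 e12; apply: Ms_le => n; apply: le_trans (Mn_le_Ms t e1 n).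
exact: Mn_mono_e.
Qed.

Lemma Mn_mono_t t1 t2 e n : (0 < e)%R -> (t1 <= t2)%R -> Mn t2 e n <= Mn t1 e n.
Proof.
move=> e0 t12; apply: Mn_lb => I ns xs H1 H2.
apply: le_trans (@Mn_ub t2 e n I ns xs H1 H2) _.
by apply: le_esum => i _; apply: W_mono_t.
Qed.

Lemma Ms_mono_t t1 t2 e : (0 < e)%R -> (t1 <= t2)%R -> Ms t2 e <= Ms t1 e.
Proof.
move=> e0 t12; apply: Ms_le => n; apply: le_trans (Mn_le_Ms t1 e n).
exact: Mn_mono_t.
Qed.

Lemma Me_le e s : Ms s e = 0 -> Me e <= s%:E.
Proof. by move=> H; apply: ereal_inf_lbound; exists s. Qed.

Lemma Me_ge e c : (forall s, Ms s e = 0 -> c <= s%:E) -> c <= Me e.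
Proof. by move=> H; apply: le_ereal_inf_tmp => _ [s Hs <-]; apply: H. Qed.

Lemma Me_noninc e1 e2 : (0 < e1)%R -> (e1 <= e2)%R -> Me e2 <= Me e1.
Proof.
move=> e10 e12; have [K0|KN0] := eqVneq K set0.
  rewrite /M_eps le_eqVlt; apply/orP; left; apply/eqP; congr ereal_inf.
  by apply/seteqP; split => _ [s _ <-]; exists s => //=; rewrite Ms_empty.
apply: Me_ge => s Hs; apply: Me_le.
have KN : K !=set0 by apply/set0P.
have s0 : (0 < s)%R.
  rewrite ltNge; apply/negP => s0; have := Ms_ge1 KN e10 s0.
  by rewrite Hs lee_fin ler10.
apply/eqP; rewrite eq_le Ms_ge0 andbT -Hs; apply: Ms_mono_e => //.
exact: ltW.
Qed.

Lemma dim_sup : dim_BS f alpha phi K = ereal_sup (Me @` [set e | (0 < e)%R]).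
Proof. apply: lim_noninc => a b a0 ab; exact: Me_noninc. Qed.

End Mlemmas.

Section Cover.
Variables (R : realType) (X : pmetricType R) (f : X -> X) (alpha : R) (phi : X -> R)
  (mu : probability (@borel_type R X) R) (t eps : R) (N : nat) (Mphi : R).
Hypotheses (fc : continuous f) (t0 : (0 < t)%R) (eps0 : (0 < eps)%R)
  (phiM : forall x, (phi x <= Mphi)%R) (phi_pos : forall x, (0 < phi x)%R).
Local Open Scope ereal_scope.

Local Notation S := (birkhoff_sum f phi).
Definition bb (p : nat * X) := bowen_ball f alpha p.1 p.2 eps.
Definition good n y := (N <= n)%N /\ (expR (- (t * S n y)))%:E <= mu (bb (n, y)).

Fixpoint U (L : seq (nat * X)) : set X :=
  match L with [::] => set0 | p :: L => bb p `|` U L end.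
Fixpoint pd (L : seq (nat * X)) : Prop :=
  match L with [::] => True | p :: L => (bb p `&` U L = set0) /\ pd L end.

Lemma bb_meas p : measurable (bb p : set (@borel_type R X)).
Proof. exact: ball_meas. Qed.

Lemma U_meas L : measurable (U L : set (@borel_type R X)).
Proof. by elim: L => [|p L IH] //=; apply: measurableU => //; apply: bb_meas. Qed.

Lemma mu_U L : pd L -> mu (U L) = \sum_(p <- L) mu (bb p).
Proof.
elim: L => [|p L IH] /=; first by rewrite big_nil measure0.
move=> [dj pdL]; rewrite big_cons -IH //.
by rewrite measureU //; [apply: bb_meas|apply: U_meas].
Qed.

Lemma sum_le1 L : pd L -> \sum_(p <- L) mu (bb p) <= 1.
Proof. by move=> pdL; rewrite -mu_U //; apply: probability_le1; apply: U_meas. Qed.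

Lemma U_cat L1 L2 : U (L1 ++ L2) = U L1 `|` U L2.
Proof. by elim: L1 => [|p L IH] /=; rewrite ?set0U // IH setUA. Qed.

Lemma pd_catr L1 L2 : pd (L1 ++ L2) -> pd L2.
Proof. by elim: L1 => [|p L IH] //= [_ /IH]. Qed.

Lemma pd_rcons L p : pd L -> bb p `&` U L = set0 -> pd (rcons L p).
Proof.
elim: L => [|a L IH] /=; first by move=> _ H; split.
move=> [da pdL]; rewrite setIUr setU_eq0 => -[pa pL]; split; last exact: IH.
rewrite -cats1 U_cat /= setU0 setIUr da set0U setIC; exact: pa.
Qed.

Lemma U_mem L z : U L z -> exists2 p, p \in L & bb p z.
Proof.
elim: L => [|a L IH] //= [Hz|/IH [p pL Hp]].
  by exists a => //; rewrite inE eqxx.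
by exists p => //; rewrite inE pL orbT.
Qed.

Definition goodT n L (T : seq X) :=
  (forall y, y \in T -> good n y) /\ pd (L ++ map (pair n) T).

Definition maxT n L (T : seq X) :=
  forall y, good n y -> exists z, bb (n, y) z /\ U (L ++ map (pair n) T) z.

Lemma S_le n y : (S n y <= n%:R * Mphi)%R.
Proof. exact: birkhoff_le. Qed.

Lemma size_bound n L T : goodT n L T ->
  ((size T)%:R * expR (- (t * (n%:R * Mphi))) <= 1)%R.
Proof.
move=> [gT pdT]; have := sum_le1 (pd_catr pdT); rewrite big_map.
set c := expR _.
have H : \sum_(y <- T) c%:E <= \sum_(y <- T) mu (bb (n, y)).
  rewrite big_seq_cond [X in _ <= X]big_seq_cond; apply: lee_sum => y /andP [yT _].
  have [_ Hy] := gT y yT; apply: le_trans Hy; rewrite lee_fin ler_expR lerN2.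
  by apply: ler_wpM2l; [exact: ltW | exact: S_le].
move=> H1; have := le_trans H H1; rewrite sumEFin lee_fin.
suff -> : (\sum_(y <- T) c = (size T)%:R * c)%R by [].
elim: T {gT pdT H H1} => [|a T IH]; first by rewrite big_nil mul0r.
by rewrite big_cons IH /= -add1n natrD mulrDl mul1r.
Qed.

Lemma step_ex n L : pd L -> exists T, goodT n L T /\ maxT n L T.
Proof.
move=> pdL; apply: contrapT => Hno.
have Hk : forall k, exists T, size T = k /\ goodT n L T.
  elim=> [|k [T [sT gT]]]; first by exists [::]; split => //; split => //; rewrite cats0.
  have : ~ maxT n L T by move=> Hm; apply: Hno; exists T.
  move/existsNP => [y]; move/not_implyP => [gy ny].
  exists (rcons T y); split; first by rewrite size_rcons sT.
  split.
    by move=> z; rewrite mem_rcons inE => /orP[/eqP->//|]; apply: gT.1.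
  rewrite map_rcons -rcons_cat; apply: pd_rcons; first exact: gT.2.
  by apply/seteqP; split => z // [h1 h2]; apply: ny; exists z.
pose x := expR (t * (n%:R * Mphi)).
have [T [sT gT]] := Hk (Num.trunc x).+1.
have := size_bound gT; rewrite sT expRN.
have xg0 : (0 < x)%R by apply: expR_gt0.
rewrite ler_pdivrMr // mul1r => Hle.
have := truncn_ge_nat (Num.trunc x).+1 (ltW xg0); rewrite Hle ltnn //.
Qed.

Definition stepT n L := xget [::] [set T | goodT n L T /\ maxT n L T].

Fixpoint Lseq k := match k with
  | 0 => [::]
  | k.+1 => Lseq k ++ map (pair k) (stepT k (Lseq k)) end.

Lemma Lseq_inv k : pd (Lseq k) /\
  (forall p, p \in Lseq k -> good p.1 p.2 /\ (p.1 < k)%N).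
Proof.
elim: k => [|k [pdk Hk]] //=.
have [[gT pdT] mT] := xgetPex [::] (step_ex k pdk).
split => // p; rewrite mem_cat => /orP[/Hk [gp lt]|/mapP [y yT ->]].
  by split => //; apply: ltnW.
by split => //; apply: gT.
Qed.

Lemma Lseq_step k : maxT k (Lseq k) (stepT k (Lseq k)).
Proof. by have [_ mT] := xgetPex [::] (step_ex k (Lseq_inv k).1). Qed.

Lemma Lseq_prefix k1 k2 : (k1 <= k2)%N -> exists post, Lseq k2 = Lseq k1 ++ post.
Proof.
elim: k2 => [|k2 IH]; first by rewrite leqn0 => /eqP->; exists [::]; rewrite cats0.
rewrite leq_eqVlt => /orP[/eqP->|]; first by exists [::]; rewrite cats0.
rewrite ltnS => /IH [post Hp]; exists (post ++ map (pair k2) (stepT k2 (Lseq k2))).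
by rewrite /= Hp catA.
Qed.

Definition d0 : nat * X := (0%N, point).

Lemma Lseq_nth k1 k2 i : (k1 <= k2)%N -> (i < size (Lseq k1))%N ->
  nth d0 (Lseq k1) i = nth d0 (Lseq k2) i.
Proof. by move=> /Lseq_prefix [post ->] Hi; rewrite nth_cat Hi. Qed.

Lemma Lseq_size k1 k2 : (k1 <= k2)%N -> (size (Lseq k1) <= size (Lseq k2))%N.
Proof. by move=> /Lseq_prefix [post ->]; rewrite size_cat leq_addr. Qed.

Definition Iset := [set i | exists k, (i < size (Lseq k))%N].
Definition kk i := xget 0%N [set k | (i < size (Lseq k))%N].
Definition pp i := nth d0 (Lseq (kk i)) i.

Lemma kkP i : Iset i -> (i < size (Lseq (kk i)))%N.
Proof. by move=> [k Hk]; exact: (xgetPex 0%N (ex_intro (fun k => (i < size (Lseq k))%N) k Hk)). Qed.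

Lemma pp_nth i k : (i < size (Lseq k))%N -> pp i = nth d0 (Lseq k) i.
Proof.
move=> Hi; have ki := kkP (ex_intro _ k Hi); rewrite /pp.
case: (leqP k (kk i)) => h; first by rewrite (Lseq_nth h Hi).
by rewrite (Lseq_nth (ltnW h) ki).
Qed.

Lemma pp_good i : Iset i -> good (pp i).1 (pp i).2.
Proof.
move=> Ii; have := kkP Ii => Hs; rewrite /pp.
by have [_ /(_ _ (mem_nth d0 Hs)) []] := Lseq_inv (kk i).
Qed.

Lemma bcover (K : set X) : (forall x, K x -> exists n, good n x) ->
  K `<=` \bigcup_(i in Iset) bowen_ball f alpha (pp i).1 (pp i).2 (2 * eps).
Proof.
move=> HK x Kx; have [n gx] := HK x Kx.
have [z [bz Uz]] := Lseq_step gx.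
have [p pL bp] := U_mem Uz.
have pL' : p \in Lseq n.+1 by [].
have [_ /(_ _ pL') [_ pn]] := Lseq_inv n.+1.
exists (index p (Lseq n.+1)); first by exists n.+1; rewrite index_mem.
rewrite (pp_nth (k := n.+1)) ?index_mem // nth_index //.
rewrite /bowen_ball /=; apply: le_lt_trans (dn_triangle f alpha _ _ z _) _.
rewrite mulr2n mulrDl !mul1r; apply: ltrD; first exact: bp.
rewrite dn_sym; apply: le_lt_trans (dn_mono f alpha _ _ _) bz; by rewrite -ltnS.
Qed.

Lemma esum_bound (m dl : R) : (0 <= m)%R -> (forall x, m <= phi x)%R -> (0 < dl)%R ->
  \esum_(i in Iset) ball_weight f alpha phi (t + dl) (2 * eps) (pp i).1 (pp i).2
    <= (expR (- (dl * (N%:R * m))))%:E.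
Proof.
move=> m0 phim dl0; set C := expR _.
have Hi : forall i, Iset i -> ball_weight f alpha phi (t + dl) (2 * eps) (pp i).1 (pp i).2
    <= mu (bb (pp i)) * C%:E.
  move=> i Ii; have [Nn gi] := pp_good Ii.
  apply: le_trans (W_le f alpha phi _ _ _ _) _.
  - by rewrite addr_ge0 // ltW.
  - by rewrite mulr_gt0.
  rewrite mulrDl opprD expRD EFinM; apply: lee_pmul;
    [by rewrite lee_fin expR_ge0 | by rewrite lee_fin expR_ge0 | exact: gi | ].
  rewrite lee_fin ler_expR lerN2; apply: ler_wpM2l; first exact: ltW.
  apply: le_trans (birkhoff_ge f _ _ phim); apply: ler_wpM2r => //.
  by rewrite ler_nat.
apply: le_trans (le_esum Hi) _.
rewrite /esum; apply: ge_ereal_sup => _ [F [finF FI] <-].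
rewrite fsbig_finite //; set Fs := fset_set F.
pose ks := (\max_(i <- Fs) kk i)%N.
have FM : [set` Fs] `<=` `I_(size (Lseq ks)).
  move=> i /= iF; have Fi : F i by move: iF; rewrite /Fs in_fset_set // => /set_mem.
  have Ii := FI i Fi; apply: leq_trans (kkP Ii) _; apply: Lseq_size.
  by rewrite /ks; exact: (leq_bigmax_seq (F:=kk) i iF isT).
have H0 : forall i, xpredT i -> 0 <= mu (bb (pp i)) * C%:E.
  by move=> i _; rewrite mule_ge0 // lee_fin expR_ge0.
apply: le_trans (lee_sum_fset_nat _ _ _ H0 FM) _.
have -> : \sum_(0 <= i < size (Lseq ks)) mu (bb (pp i)) * C%:E =
    \sum_(0 <= i < size (Lseq ks)) mu (bb (nth d0 (Lseq ks) i)) * C%:E.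
  by rewrite !big_nat; apply: eq_bigr => i /andP [_ Hi2]; rewrite (pp_nth Hi2).
rewrite -(big_nth d0 xpredT (fun p => mu (bb p) * C%:E)).
rewrite -ge0_sume_distrl; last by move=> p _; apply: measure_ge0.
rewrite -[X in _ <= X]mul1e; apply: lee_wpmul2r; first by rewrite lee_fin expR_ge0.
exact: sum_le1 (Lseq_inv ks).1.
Qed.

End Cover.

Section Mass.
Variables (R : realType) (X : pmetricType R) (f : X -> X) (alpha : R) (phi : X -> R)
  (mu : probability (@borel_type R X) R) (K K' : set X)
  (m e rho th beta t : R) (N : nat).
Hypotheses (fc : continuous f) (a0 : (0 <= alpha)%R)
  (phim : forall x, (m <= phi x)%R) (m0 : (0 < m)%R) (phi_pos : forall x, (0 < phi x)%R)
  (KK : K' `<=` K) (e0 : (0 < e)%R) (rho0 : (0 < rho)%R)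
  (hrho : forall y z, (mdist y z < rho)%R -> (`|phi y - phi z| < th)%R)
  (t0 : (0 < t)%R) (tb : (t <= beta)%R) (margin : (t * th <= (beta - t) * m)%R)
  (HK' : forall x, K' x -> forall n, (N <= n)%N ->
     (mu (bowen_ball f alpha n x e) <= (expR (- (beta * birkhoff_sum f phi n x)))%:E)%E).
Local Open Scope ereal_scope.

Local Notation S := (birkhoff_sum f phi).
Let e' := (Num.min e rho / 2)%R.

Lemma e'0 : (0 < e')%R.
Proof. by rewrite /e' divr_gt0 // lt_min e0 rho0. Qed.

Lemma e'2 : (e' + e' <= Num.min e rho)%R.
Proof. by rewrite /e' -splitr. Qed.

Lemma S_close n y z : (dn_alpha f alpha n y z < rho)%R ->
  (S n z <= S n y + n%:R * th)%R.
Proof.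
move=> yz; rewrite /birkhoff_sum.
have -> : (n%:R * th = \sum_(i < n) th)%R by rewrite sumr_const card_ord mulr_natl.
rewrite -big_split /=; apply: ler_sum => i _.
have : (`|phi (iter i f y) - phi (iter i f z)| < th)%R.
  apply: hrho; apply: le_lt_trans yz; exact: mdist_le_dn.
rewrite ltr_norml => /andP [h1 h2]; lra.
Qed.

Lemma pointwise n y x : (N <= n)%N -> K' y -> bowen_ball f alpha n x e' y ->
  mu (bowen_ball f alpha n x e') <= ball_weight f alpha phi t e' n x.
Proof.
move=> Nn K'y bxy.
have sub : bowen_ball f alpha n x e' `<=` bowen_ball f alpha n y e.
  move=> z bz; rewrite /bowen_ball /=; apply: le_lt_trans (dn_triangle f alpha _ _ x _) _.
  rewrite dn_sym; apply: lt_le_trans (ltrD bxy bz) _; apply: le_trans e'2 _.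
  by rewrite ge_min lexx.
have Hm : mu (bowen_ball f alpha n x e') <= mu (bowen_ball f alpha n y e).
  by apply: le_measure => //; apply/mem_set; apply: ball_meas.
apply: le_trans Hm _.
apply: le_trans (HK' K'y Nn) _.
apply: le_trans (@W_ge _ _ f alpha phi t e' n x (S n y + n%:R * th) _ _); last first.
- apply: ge_ereal_sup => _ [z bz <-]; rewrite lee_fin; apply: S_close.
  apply: le_lt_trans (dn_triangle f alpha _ _ x _) _; rewrite (dn_sym f alpha n y).
  apply: lt_le_trans (ltrD bxy bz) _; apply: le_trans e'2 _.
  by rewrite ge_min lexx orbT.
- exact: ltW.
rewrite lee_fin ler_expR lerN2.
have Sg : (n%:R * m <= S n y)%R by apply: birkhoff_ge.
have : (t * (n%:R * th) <= (beta - t) * S n y)%R.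
  rewrite mulrCA; apply: le_trans (_ : _ <= n%:R * ((beta - t) * m))%R _.
    by apply: ler_wpM2l.
  rewrite mulrCA; apply: ler_wpM2l; last exact: Sg.
  by rewrite subr_ge0.
move=> h; rewrite mulrDr; lra.
Qed.

Lemma mass_bound n : (N <= n)%N -> mu_ext mu K' <= M_n f alpha phi K t e' n.
Proof.
move=> Nn; apply: Mn_lb => I ns xs Hns Hcov.
pose I' := [set i | I i /\ exists y, K' y /\ bowen_ball f alpha (ns i) (xs i) e' y].
pose F i := if `[< I' i >] then bowen_ball f alpha (ns i) (xs i) e' else set0.
have Fm i : measurable (F i : set (@borel_type R X)).
  by rewrite /F; case: asboolP => _ //; apply: ball_meas.
apply: le_trans (_ : _ <= \sum_(k <oo) mu (F k)) _.
  apply: ereal_inf_lbound; exists F => //; split => // y K'y.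
  have [i Ii by_] := Hcov y (KK K'y); exists i => //.
  rewrite /F; case: asboolP => // nI; exfalso; apply: nI; split => //; by exists y.
rewrite nneseries_esumT; last by move=> k; apply: measure_ge0.
rewrite [X in _ <= X]esum_mkcond; apply: le_esum => i _.
rewrite /F; case: asboolP => [[Ii [y [K'y bxy]]]|_].
  rewrite ifT; last by apply/mem_set.
  apply: pointwise => //; last exact: bxy.
    exact: leq_trans Nn (Hns i Ii).
    exact: K'y.
rewrite measure0; case: ifP => _ //; apply: W_ge0.
Qed.

End Mass.

Section Main.
Variables (R : realType) (X : pmetricType R) (f : X -> X) (alpha : R) (phi : X -> R)
  (mu : probability (@borel_type R X) R) (K : set X) (m Mphi : R).
Hypotheses (fc : continuous f) (a0 : (0 <= alpha)%R)
  (phi_pos : forall x, (0 < phi x)%R) (m0 : (0 < m)%R) (phim : forall x, (m <= phi x)%R)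
  (phiM : forall x, (phi x <= Mphi)%R).
Local Open Scope ereal_scope.
Local Notation S := (birkhoff_sum f phi).

Definition gx x eps := limn_einf (fun n =>
  (- lne (mu (bowen_ball f alpha n x eps))) * ((S n x)^-1)%:E).

Lemma gx_noninc x a b : (0 < a)%R -> (a <= b)%R -> gx x b <= gx x a.
Proof.
move=> a0' ab; apply: liminf_le => n; apply: ent_mono.
- exact: measure_ge0.
- apply: le_measure; try (apply/mem_set; apply: ball_meas => //).
  exact: ball_mono_eps.
- by rewrite invr_ge0 S_ge0.
Qed.

Lemma P_eq x : local_BK_entropy f alpha phi mu x = lim (gx x e @[e --> 0%R^'+]).
Proof. by []. Qed.

Lemma gx_le_P x e : (0 < e)%R -> gx x e <= local_BK_entropy f alpha phi mu x.
Proof. by move=> e0; rewrite P_eq; apply: lim_noninc_ge => // a b; apply: gx_noninc. Qed.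

Lemma S_pos n x : (1 <= n)%N -> (0 < S n x)%R.
Proof.
move=> n1; apply: lt_le_trans (birkhoff_ge f n x phim).
by rewrite mulr_gt0 // ltr0n.
Qed.

Lemma part1 s : (0 < s)%R ->
  (forall x, K x -> local_BK_entropy f alpha phi mu x <= s%:E) ->
  dim_BS f alpha phi K <= s%:E.
Proof.
move=> s0 HP; rewrite (dim_sup f alpha phi_pos K).
apply: ge_ereal_sup => _ [e e0 <-].
apply/lee_addgt0Pr => ep ep0.
set dl := (ep / 2)%R; set eps := (e / 2)%R.
have dl0 : (0 < dl)%R by rewrite divr_gt0.
have eps0 : (0 < eps)%R by rewrite divr_gt0.
have ee : e = (2 * eps)%R by rewrite /eps mulrC -mulrA mulVf ?mulr1.
have se : (s + ep = s + dl + dl)%R by rewrite /dl -addrA -splitr.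
rewrite -EFinD se ee; apply: Me_le.
have t0 : (0 < s + dl)%R by rewrite addr_gt0.
apply/eqP; rewrite eq_le Ms_ge0 andbT; apply: Ms_le => n0.
apply/lee_addgt0Pr => eta eta0; rewrite add0e.
pose xx := (- ln eta / (dl * m))%R.
pose N := maxn (maxn n0 1) (Num.trunc xx).+1.
have N1 : (1 <= N)%N by rewrite /N leq_max leq_max leqnn orbT.
have xN : (xx < N%:R)%R.
  apply: lt_le_trans (_ : _ < (Num.trunc xx).+1%:R)%R _.
    by rewrite -truncn_le_nat.
  by rewrite ler_nat /N leq_max leqnn orbT.
have n0N : (n0 <= N)%N by rewrite /N leq_max leq_max leqnn.
apply: le_trans (Mn_nondec f alpha phi K _ _ n0N) _.
have Hgood : forall x, K x -> exists n, good f alpha phi mu (s + dl) eps N n x.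
  move=> x Kx; have := le_lt_trans (le_trans (gx_le_P x eps0) (HP x Kx))
    (_ : s%:E < (s + dl)%:E); rewrite lte_fin ltrDl => /(_ dl0) Hl.
  have [n Nn Hn] := liminf_lt Hl N; exists n; split => //.
  apply/ltW; apply: ent_lt Hn; apply: S_pos; exact: leq_trans N1 Nn.
apply: le_trans (Mn_ub phi (s + dl + dl) _ (bcover fc t0 phiM Hgood)) _.
  by move=> i /(pp_good fc t0 phiM) [].
apply: le_trans (esum_bound alpha mu N fc t0 eps0 phiM (ltW m0) phim dl0) _.
rewrite lee_fin -[leRHS]lnK ?posrE // ler_expR.
have : (xx * (dl * m) < N%:R * (dl * m))%R by rewrite ltr_pM2r ?mulr_gt0.
rewrite /xx -mulrA mulVf ?mulr1; last by rewrite mulf_neq0 // gt_eqF.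
move=> h; rewrite mulrCA; lra.
Qed.

Lemma part2 s : (0 < s)%R -> compact [set: X] -> continuous phi ->
  measurable (K : set (@borel_type R X)) ->
  (forall x, K x -> s%:E <= local_BK_entropy f alpha phi mu x) ->
  0 < mu K -> s%:E <= dim_BS f alpha phi K.
Proof.
move=> s0 cX pc mK HP muK.
apply/lee_addgt0Pr => ep ep0.
set dl := (Num.min ep s / 4)%R.
have mn0 : (0 < Num.min ep s)%R by rewrite lt_min ep0 s0.
have dl0 : (0 < dl)%R by rewrite divr_gt0.
have mns : (Num.min ep s <= s)%R by rewrite ge_min lexx orbT.
have mne : (Num.min ep s <= ep)%R by rewrite ge_min lexx.
have dls : (dl + dl < s)%R by rewrite /dl; lra.
have dlep : (dl + dl <= ep)%R by rewrite /dl; lra.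
suff H : (s - (dl + dl))%:E <= dim_BS f alpha phi K.
  apply: le_trans (leeD H (_ : (dl + dl)%:E <= ep%:E)); last by rewrite lee_fin.
  by rewrite -EFinD subrK.
set beta := (s - dl)%R; set t := (s - (dl + dl))%R.
have t0 : (0 < t)%R by rewrite /t subr_gt0.
pose Kjn j N := [set x | K x /\ forall n, (N <= n)%N ->
  mu (bowen_ball f alpha n x (j.+1%:R^-1)) <= (expR (- (beta * S n x)))%:E].
have cov : K `<=` \bigcup_j \bigcup_N Kjn j N.
  move=> x Kx.
  have Hb : beta%:E < local_BK_entropy f alpha phi mu x.
    apply: lt_le_trans (HP x Kx); rewrite lte_fin /beta; lra.
  rewrite P_eq lim_noninc in Hb; last by move=> a b; apply: gx_noninc.
  have [_ [ex ex0 <-] Hbx] := ereal_sup_gt Hb.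
  pose j := Num.trunc (ex^-1).
  have ej : (j.+1%:R^-1 <= ex)%R.
    rewrite -[leRHS]invrK lef_pV2 ?posrE ?invr_gt0 ?ltr0Sn //.
    by apply/ltW; rewrite -truncn_le_nat.
  have Hb' : beta%:E < gx x (j.+1%:R^-1).
    apply: lt_le_trans Hbx _; apply: gx_noninc => //; by rewrite invr_gt0 ltr0Sn.
  have [N0 HN0] := liminf_gt Hb'.
  exists j => //; exists (maxn N0 1) => //; split => // n Nn.
  apply: ent_gt; first by apply: S_pos; apply: leq_trans Nn; rewrite leq_max leqnn orbT.
    exact: measure_ge0.
  by apply: HN0; apply: leq_trans Nn; rewrite leq_max leqnn.
have [j [N K'pos]] : exists j N, 0 < mu_ext mu (Kjn j N).
  apply: contrapT => Hno.
  have H0 : forall j N, mu_ext mu (Kjn j N) = 0.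
    move=> j N; apply/eqP; rewrite eq_le mu_ext_ge0 ?andbT; last exact: measure_ge0.
    by rewrite leNgt; apply/negP => h; apply: Hno; exists j, N.
  have : mu K <= 0.
    rewrite -(measurable_mu_extE mu mK).
    apply: le_trans (le_mu_ext mu cov) _.
    apply: le_trans (mu_ext_sigma_subadditive (measure_ge0 mu) _) _.
    rewrite eseries0 // => j' _ _; apply/eqP; rewrite eq_le mu_ext_ge0 ?andbT;
      last exact: measure_ge0.
    apply: le_trans (mu_ext_sigma_subadditive (measure_ge0 mu) _) _.
    by rewrite eseries0 // => N' _ _; apply: H0.
  by rewrite leNgt muK.
pose e : R := (j.+1%:R^-1)%R.
set th := (dl * m / s)%R.
have th0 : (0 < th)%R by rewrite /th !mulr_gt0 // invr_gt0.
have [rho rho0 hrho] := heine cX pc th0.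
have tb : (t <= beta)%R by rewrite /t /beta; lra.
have margin : (t * th <= (beta - t) * m)%R.
  rewrite /th mulrA ler_pdivrMr //.
  have h1 : (0 <= dl * m)%R by rewrite mulr_ge0 // ltW.
  have h2 : (0 <= s - t)%R by rewrite /t; lra.
  have -> : (beta - t = dl)%R by rewrite /beta /t; ring.
  have : (0 <= (s - t) * (dl * m))%R by rewrite mulr_ge0.
  lra.
have KK : Kjn j N `<=` K by move=> x [].
have HK' : forall x, Kjn j N x -> forall n, (N <= n)%N ->
    mu (bowen_ball f alpha n x e) <= (expR (- (beta * S n x)))%:E.
  by move=> x [_ Hx].
have Hmb := mass_bound fc a0 phim KK hrho t0 tb margin HK' (leqnn N).
set e' := (Num.min e rho / 2)%R in Hmb.
have e'0 : (0 < e')%R by rewrite /e' divr_gt0 // lt_min rho0 invr_gt0 ltr0Sn.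
have Mspos : 0 < M_s f alpha phi K t e'.
  apply: lt_le_trans K'pos _; apply: le_trans Hmb _; exact: Mn_le_Ms.
rewrite (dim_sup f alpha phi_pos K).
apply: le_trans (_ : M_eps f alpha phi K e' <= _); last first.
  by apply: ereal_sup_ubound; exists e'.
apply: Me_ge => s' Hs'; rewrite lee_fin; rewrite leNgt; apply/negP => s't.
have := Ms_mono_t f alpha phi_pos K e'0 (ltW s't).
by rewrite Hs' leNgt Mspos.
Qed.

End Main.


Theorem mainTheorem7 (R : realType) (X : pmetricType R)
    (f : X -> X) (mu : probability (@borel_type R X) R) (K : set X)
    (alpha : R) (phi : X -> R) :
  compact [set: X] -> continuous f ->
  measurable (K : set (@borel_type R X)) ->
  (0 <= alpha) -> continuous phi -> (forall x, 0 < phi x) ->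
  forall s : R, 0 < s ->
    ((forall x, K x -> (local_BK_entropy f alpha phi mu x <= s%:E)%E) ->
       (dim_BS f alpha phi K <= s%:E)%E)
    /\
    ((forall x, K x -> (s%:E <= local_BK_entropy f alpha phi mu x)%E) ->
       (0 < mu K)%E ->
       (s%:E <= dim_BS f alpha phi K)%E).
Proof.
move=> cX fc mK a0 pc pp s s0.
have [m m0 phim] := cpt_min cX pc pp.
have [M phiM] := cpt_max cX pc.
split.
  by move=> HP; apply: (part1 fc pp m0 phim phiM s0 HP).
by move=> HP muK; apply: (part2 fc a0 pp m0 phim s0 cX pc mK HP muK).
Qed.
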